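(* Let $K>1$ and let $n_1,\dots,n_K$ be positive integers. Then \[ \mathbb{E}[\tau(n_1,\dots,n_K)] \;\le\; K\cdot \min_c n_c . \]
   Context: Initial stocks $\vec n^{(0)}=(n_1,\dots,n_K)$ of $K$ goodie types evolve as follows: at each step $t=1,2,\dots$, as long as at least two coordinates of $\vec n^{(t-1)}$ are nonzero, an index $i$ is chosen uniformly at random (independently of the past) among the indices with $n_i^{(t-1)}>0$, and $\vec n^{(t)}=\vec n^{(t-1)}-\vec e_i$ ($\vec e_i$ the $i$-th standard unit vector). The time of the first emptying event is $\tau(n_1,\dots,n_K)=\min\{t : \exists i \text{ with } n_i^{(t)}=0 \text{ and } n_i^{(0)}>0\}$. *)

(* Defs.v *)
From mathcomp Require Import all_boot all_order all_algebra.
Set Implicit Arguments. Unset Strict Implicit. Unset Printing Implicit Defensive.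
Import Order.TTheory GRing.Theory Num.Theory.

Definition dec K (n : 'I_K -> nat) (i : 'I_K) : 'I_K -> nat :=
  fun j => if j == i then (n j).-1 else n j.

Definition nnz K (n : 'I_K -> nat) : nat := #|[pred j | 0 < n j]|.

Definition run K (n : 'I_K -> nat) (s : seq 'I_K) : 'I_K -> nat :=
  foldl (@dec K) n s.

(* probability that the first |s| choices of the process started at n
   are exactly s: while at least two coordinates are nonzero, an index is
   chosen uniformly among the nonzero ones; otherwise the process stops
   (no further step, probability 0 of any further choice). *)
Fixpoint pathprob K (n : 'I_K -> nat) (s : seq 'I_K) : rat :=
  match s with
  | [::] => 1
  | i :: s' =>
      (if ((1 < nnz n) && (0 < n i))%N then ((nnz n)%:R)^-1 else 0)%R
      * pathprob (dec n i) s'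
  end.

Definition emptied K (n0 m : 'I_K -> nat) : bool :=
  [exists i, (0 < n0 i) && (m i == 0)].

Definition tau_is K (n0 : 'I_K -> nat) (s : seq 'I_K) (t : nat) : bool :=
  (size s == t) && emptied n0 (run n0 s)
  && [forall k : 'I_t, ~~ emptied n0 (run n0 (take k s))].

(* E[tau(n0)] = sum_t t * P(tau = t).  Each step lowers the total stock by
   one, so tau <= \sum_i n0 i and the sum over t can stop there. *)
Definition Etau K (n0 : 'I_K -> nat) : rat :=
  (\sum_(t < (\sum_(i < K) n0 i).+1)
     (t%:R * \sum_(s : t.-tuple 'I_K) pathprob n0 s * (tau_is n0 s t)%:R))%R.

(* Main.v *)
Require Import Defs.
From mathcomp Require Import all_boot all_order all_algebra.
Import Order.TTheory GRing.Theory Num.Theory.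
From mathcomp Require Import zify ring lra.

Section Aux.
Local Open Scope ring_scope.

Lemma forall_ordS t (P : nat -> bool) :
  [forall k : 'I_t.+1, P k] = P 0%N && [forall k : 'I_t, P k.+1].
Proof.
apply/forallP/andP => [H|[H0 /forallP H] k].
- split; first exact: (H ord0).
  apply/forallP => k; exact: (H (lift ord0 k)).
- case: k => [[|k] Hk] //=; exact: (H (Ordinal (Hk : (k < t)%N))).
Qed.

Lemma big_tuple_cons (T : finType) t (f : seq T -> rat) :
  \sum_(s : t.+1.-tuple T) f s = \sum_(i : T) \sum_(s : t.-tuple T) f (i :: s).
Proof.
rewrite pair_big /=.
rewrite (reindex (fun p : T * t.-tuple T => [tuple of p.1 :: p.2])) /=; last first.
  exists (fun s : t.+1.-tuple T => (thead s, [tuple of behead s])).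
  - by move=> [i s] _ /=; congr pair; apply: val_inj.
  - by move=> s _; rewrite /= [in RHS](tuple_eta s).
by apply: eq_bigr.
Qed.

Lemma sum_recl (f : nat -> rat) T :
  \sum_(t < T.+1) f t = f 0%N + \sum_(t < T) f t.+1.
Proof. by rewrite big_ord_recl. Qed.

Variable K : nat.
Hypothesis hK : (1 < K)%N.
Variable n0 : 'I_K -> nat.
Hypothesis hpos : forall i, (0 < n0 i)%N.

Definition tauq (m : 'I_K -> nat) (s : seq 'I_K) (t : nat) : bool :=
  (size s == t) && emptied n0 (run m s)
  && [forall k : 'I_t, ~~ emptied n0 (run m (take k s))].

Definition F m t : rat :=
  \sum_(s : t.-tuple 'I_K) pathprob m s * (tauq m s t)%:R.
Definition P m T : rat := \sum_(t < T) F m t.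
Definition G m T : rat := \sum_(t < T) t%:R * F m t.

Lemma emptiedE m : emptied n0 m = [exists i, m i == 0%N].
Proof. by apply: eq_existsb => i; rewrite hpos. Qed.

Lemma tauq_cons m i s t : ~~ emptied n0 m ->
  tauq m (i :: s) t.+1 = tauq (dec m i) s t.
Proof.
move=> hm.
rewrite /tauq (forall_ordS _ (fun k => ~~ emptied n0 (run m (take k (i :: s))))).
rewrite /run /= hm /=.
done.
Qed.

Lemma nnz_all m : ~~ emptied n0 m -> nnz m = K.
Proof.
rewrite emptiedE negb_exists => /forallP H.
rewrite /nnz -[RHS]card_ord; apply: eq_card => j.
by rewrite !inE lt0n H.
Qed.

Lemma F_cons m t : ~~ emptied n0 m ->
  F m t.+1 = K%:R^-1 * \sum_i F (dec m i) t.
Proof.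
move=> hm; rewrite /F (@big_tuple_cons _ t (fun s => pathprob m s * (tauq m s t.+1)%:R)) mulr_sumr.
apply: eq_bigr => i _; rewrite mulr_sumr; apply: eq_bigr => s _.
have mi : (0 < m i)%N.
  move: hm; rewrite emptiedE negb_exists => /forallP /(_ i).
  by rewrite lt0n.
rewrite /= nnz_all // hK mi /= tauq_cons // mulrA.
done.
Qed.

Lemma F0_ne m : ~~ emptied n0 m -> F m 0 = 0.
Proof.
move=> hm; rewrite /F; apply: big1 => s _.
by rewrite (tuple0 s) /tauq /run /= (negbTE hm) mulr0.
Qed.

Lemma F0_e m : emptied n0 m -> F m 0 = 1.
Proof.
move=> hm; rewrite /F.
rewrite (eq_bigr (fun _ => 1)); last first.
  move=> s _; rewrite (tuple0 s) /tauq /run /= hm /=.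
  have -> : [forall k : 'I_0, ~~ true] = true by apply/forallP => -[].
  by rewrite mul1r.
by rewrite (big_pred1 [tuple]) // => s; rewrite /= (tuple0 s); apply/esym/eqP.
Qed.

Lemma FS_e m t : emptied n0 m -> F m t.+1 = 0.
Proof.
move=> hm; rewrite /F; apply: big1 => s _.
rewrite /tauq (forall_ordS _ (fun k => ~~ emptied n0 (run m (take k s)))).
by rewrite take0 /run /= hm /= !andbF mulr0.
Qed.

Lemma P_le T : forall m, P m T <= 1.
Proof.
elim: T => [|T IH] m; first by rewrite /P big_ord0 ler01.
rewrite /P (sum_recl (F m)); case: (boolP (emptied n0 m)) => hm.
  by rewrite F0_e // big1 ?addr0 // => t _; exact: FS_e.
rewrite F0_ne // add0r.
rewrite (eq_bigr (fun t : 'I_T => K%:R^-1 * \sum_i F (dec m i) t)); last first.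
  by move=> t _; exact: F_cons.
rewrite -mulr_sumr exchange_big /=.
apply: (@le_trans _ _ (K%:R^-1 * \sum_(i < K) 1)).
  apply: ler_wpM2l; first by rewrite invr_ge0 ler0n.
  by apply: ler_sum => i _; exact: IH.
rewrite sumr_const card_ord.
have K0 : (K%:R : rat) != 0 by rewrite pnatr_eq0; lia.
by rewrite mulVr ?unitfE.
Qed.

Lemma G_le c T : forall m, G m T <= K%:R * (m c)%:R.
Proof.
elim: T => [|T IH] m; first by rewrite /G big_ord0 mulr_ge0 // ler0n.
rewrite /G (sum_recl (fun t => t%:R * F m t)) mul0r add0r; case: (boolP (emptied n0 m)) => hm.
  rewrite big1 ?mulr_ge0 ?ler0n // => t _.
  by rewrite FS_e // mulr0.
have -> : \sum_(t < T) (t.+1)%:R * F m t.+1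
    = K%:R^-1 * \sum_i (G (dec m i) T + P (dec m i) T).
  rewrite /G /P.
  under eq_bigr => t _ do rewrite F_cons // mulrCA mulr_sumr.
  rewrite -mulr_sumr exchange_big /=; congr (_ * _).
  apply: eq_bigr => i _; rewrite -big_split /=.
  by apply: eq_bigr => t _; rewrite -[t.+1]addn1 natrD mulrDl mul1r.
have mc : (0 < m c)%N.
  move: hm; rewrite emptiedE negb_exists => /forallP /(_ c).
  by rewrite lt0n.
apply: (@le_trans _ _ (K%:R^-1 * \sum_(i < K) (K%:R * (dec m i c)%:R + 1))).
  apply: ler_wpM2l; first by rewrite invr_ge0 ler0n.
  by apply: ler_sum => i _; apply: lerD; [exact: IH | exact: P_le].
have hnat : (\sum_(i < K) dec m i c + 1 = K * m c)%N.
  rewrite (bigD1 c) //= {1}/dec eqxx.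
  rewrite (eq_bigr (fun _ => m c)); last first.
    by move=> i hi; rewrite /dec eq_sym (negbTE hi).
  rewrite sum_nat_const cardC1 card_ord.
  nia.
have K0 : (K%:R : rat) != 0 by rewrite pnatr_eq0; lia.
rewrite big_split /= -mulr_sumr sumr_const card_ord mulrDr mulrA.
have KK : (K%:R : rat)^-1 * K%:R = 1 by rewrite mulVf.
rewrite KK mul1r.
by rewrite -natr_sum -natrM -hnat natrD.
Qed.

End Aux.

Theorem lemma2 (K : nat) (hK : 1 < K) (n : 'I_K -> nat)
  (hpos : forall i, 0 < n i) :
  forall c : 'I_K, (Etau n <= K%:R * (n c)%:R)%R.
Proof.
move=> c.
exact: (@G_le K hK n hpos c (\sum_(i < K) n i).+1 n).
Qed.
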